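(* Let $(a,b)\in\mathbb{C}^2$ and $X=\{u_1x=v_1y,\ u_2z=v_2t,\ w^2+xy+zt=a(xt+yz)+b(xz+yt)\}\subset\mathbb{P}^1\times\mathbb{P}^1\times\mathbb{P}^4$, and let $G\subset\mathrm{Aut}(X)$ be the group generated by $\tau_1,\tau_2,\tau_3$. Then: (1) if $X$ is smooth, then $X$ has no $G$-fixed points; (2) if $X$ has exactly one singular point, then this singular point is the only $G$-fixed point in $X$.
   Context: Coordinates are $([u_1:v_1],[u_2:v_2],[x:y:z:t:w])$. The involutions are $\tau_1\colon([u_1:v_1],[u_2:v_2],[x:y:z:t:w])\mapsto([v_1:u_1],[v_2:u_2],[y:x:t:z:w])$, $\tau_2\colon\mapsto([u_2:v_2],[u_1:v_1],[z:t:x:y:w])$, $\tau_3\colon\mapsto([u_1:v_1],[u_2:v_2],[x:y:z:t:-w])$; $G\cong\boldsymbol{\mu}_2^3$. *)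

(* Defs.v *)
From mathcomp Require Import all_boot all_algebra.
From mathcomp Require Import Rstruct complex.
From mathcomp Require Import mpoly.
Set Implicit Arguments. Unset Strict Implicit. Unset Printing Implicit Defensive.
Import GRing.Theory.
Local Open Scope ring_scope.

Definition C : numClosedFieldType := complex Rdefinitions.R.

(* Homogeneous coordinates ([u1:v1],[u2:v2],[x:y:z:t:w]) are stored as a
   function 'I_9 -> C with indices
   u1 = 0, v1 = 1, u2 = 2, v2 = 3, x = 4, y = 5, z = 6, t = 7, w = 8. *)
Definition iu1 : 'I_9 := inord 0.
Definition iv1 : 'I_9 := inord 1.
Definition iu2 : 'I_9 := inord 2.
Definition iv2 : 'I_9 := inord 3.
Definition ix : 'I_9 := inord 4.
Definition iy : 'I_9 := inord 5.
Definition iz : 'I_9 := inord 6.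
Definition it : 'I_9 := inord 7.
Definition iw : 'I_9 := inord 8.

Definition coords := 'I_9 -> C.

Definition factor (i : 'I_9) : 'I_3 :=
  if (i < 2)%N then inord 0 else if (i < 4)%N then inord 1 else inord 2.

Definition valid (v : coords) : Prop :=
  forall k : 'I_3, exists i : 'I_9, factor i = k /\ v i != 0.

Definition proj_eq (v v' : coords) : Prop :=
  exists lam : 'I_3 -> C, (forall k, lam k != 0) /\
    forall i, v' i = lam (factor i) * v i.

Definition F (a b : C) (k : 'I_3) : {mpoly C[9]} :=
  if k == inord 0 :> 'I_3 then 'X_iu1 * 'X_ix - 'X_iv1 * 'X_iy
  else if k == inord 1 :> 'I_3 then 'X_iu2 * 'X_iz - 'X_iv2 * 'X_it
  else 'X_iw ^+ 2 + 'X_ix * 'X_iy + 'X_iz * 'X_it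
       - a%:MP * ('X_ix * 'X_it + 'X_iy * 'X_iz)
       - b%:MP * ('X_ix * 'X_iz + 'X_iy * 'X_it).

Definition onX (a b : C) (v : coords) : Prop :=
  valid v /\ forall k, (F a b k).@[v] = 0.

Definition jac (a b : C) (v : coords) : 'M[C]_(3, 9) :=
  \matrix_(k < 3, i < 9) ((F a b k)^`M(i)).@[v].

Definition singular (a b : C) (v : coords) : Prop :=
  onX a b v /\ (\rank (jac a b v) < 3)%N.

Definition smoothX (a b : C) : Prop := forall v, onX a b v -> ~ singular a b v.

Definition tau1 (v : coords) : coords :=
  fun i => if i == iu1 then v iv1 else if i == iv1 then v iu1
    else if i == iu2 then v iv2 else if i == iv2 then v iu2
    else if i == ix then v iy else if i == iy then v ix
    else if i == iz then v it else if i == it then v iz else v i.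

Definition tau2 (v : coords) : coords :=
  fun i => if i == iu1 then v iu2 else if i == iv1 then v iv2
    else if i == iu2 then v iu1 else if i == iv2 then v iv1
    else if i == ix then v iz else if i == iy then v it
    else if i == iz then v ix else if i == it then v iy else v i.

Definition tau3 (v : coords) : coords :=
  fun i => if i == iw then - v iw else v i.

(* v is fixed by G = <tau1, tau2, tau3> (equivalently, by each generator). *)
Definition Gfixed (v : coords) : Prop :=
  proj_eq v (tau1 v) /\ proj_eq v (tau2 v) /\ proj_eq v (tau3 v).

(* Main.v *)
Require Import Defs.
From mathcomp Require Import all_boot all_algebra.
From mathcomp Require Import Rstruct complex.
From mathcomp Require Import mpoly.
From mathcomp Require Import ring.
Set Implicit Arguments. Unset Strict Implicit. Unset Printing Implicit Defensive.
Import GRing.Theory.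
Local Open Scope ring_scope.

Lemma Eu1 : iu1 = @Ordinal 9 0 erefl. Proof. by apply: val_inj; rewrite /= inordK. Qed.
Lemma Ev1 : iv1 = @Ordinal 9 1 erefl. Proof. by apply: val_inj; rewrite /= inordK. Qed.
Lemma Eu2 : iu2 = @Ordinal 9 2 erefl. Proof. by apply: val_inj; rewrite /= inordK. Qed.
Lemma Ev2 : iv2 = @Ordinal 9 3 erefl. Proof. by apply: val_inj; rewrite /= inordK. Qed.
Lemma Ex : ix = @Ordinal 9 4 erefl. Proof. by apply: val_inj; rewrite /= inordK. Qed.
Lemma Ey : iy = @Ordinal 9 5 erefl. Proof. by apply: val_inj; rewrite /= inordK. Qed.
Lemma Ez : iz = @Ordinal 9 6 erefl. Proof. by apply: val_inj; rewrite /= inordK. Qed.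
Lemma Et : it = @Ordinal 9 7 erefl. Proof. by apply: val_inj; rewrite /= inordK. Qed.
Lemma Ew : iw = @Ordinal 9 8 erefl. Proof. by apply: val_inj; rewrite /= inordK. Qed.

Definition K0 : 'I_3 := @Ordinal 3 0 erefl.
Definition K1 : 'I_3 := @Ordinal 3 1 erefl.
Definition K2 : 'I_3 := @Ordinal 3 2 erefl.
Lemma EK0 : (inord 0 : 'I_3) = K0. Proof. by apply: val_inj; rewrite /= inordK. Qed.
Lemma EK1 : (inord 1 : 'I_3) = K1. Proof. by apply: val_inj; rewrite /= inordK. Qed.
Lemma EK2 : (inord 2 : 'I_3) = K2. Proof. by apply: val_inj; rewrite /= inordK. Qed.

Ltac idx := rewrite ?Eu1 ?Ev1 ?Eu2 ?Ev2 ?Ex ?Ey ?Ez ?Et ?Ew /=.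

Lemma I9P (P : 'I_9 -> Prop) : P iu1 -> P iv1 -> P iu2 -> P iv2 -> P ix -> P iy ->
  P iz -> P it -> P iw -> forall i, P i.
Proof.
idx => H0 H1 H2 H3 H4 H5 H6 H7 H8.
case=> [[|[|[|[|[|[|[|[|[|m]]]]]]]]] Hm] //;
  by rewrite (bool_irrelevance Hm erefl).
Qed.

Lemma I3P (P : 'I_3 -> Prop) : P K0 -> P K1 -> P K2 -> forall k, P k.
Proof.
move=> H0 H1 H2.
case=> [[|[|[|m]]] Hm] //; by rewrite (bool_irrelevance Hm erefl).
Qed.

Lemma fu1 : factor iu1 = K0. Proof. by rewrite /factor; idx; rewrite EK0. Qed.
Lemma fv1 : factor iv1 = K0. Proof. by rewrite /factor; idx; rewrite EK0. Qed.
Lemma fu2 : factor iu2 = K1. Proof. by rewrite /factor; idx; rewrite EK1. Qed.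
Lemma fv2 : factor iv2 = K1. Proof. by rewrite /factor; idx; rewrite EK1. Qed.
Lemma fx : factor ix = K2. Proof. by rewrite /factor; idx; rewrite EK2. Qed.
Lemma fy : factor iy = K2. Proof. by rewrite /factor; idx; rewrite EK2. Qed.
Lemma fz : factor iz = K2. Proof. by rewrite /factor; idx; rewrite EK2. Qed.
Lemma ft : factor it = K2. Proof. by rewrite /factor; idx; rewrite EK2. Qed.
Lemma fw : factor iw = K2. Proof. by rewrite /factor; idx; rewrite EK2. Qed.

Ltac fac := rewrite ?fu1 ?fv1 ?fu2 ?fv2 ?fx ?fy ?fz ?ft ?fw.

Lemma t2 (v : coords) : tau2 v ix = v iz.
Proof. by rewrite /tau2; idx. Qed.

Lemma mderivXU (i j : 'I_9) : ('X_i : {mpoly C[9]})^`M(j) = (i == j)%:R%:MP.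
Proof.
rewrite mderivX mnm1E; case: eqP => [->|_].
  have -> : (U_(j) - U_(j))%MM = 0%MM :> 'X_{1..9}.
    by apply/mnmP => k; rewrite mnmBE mnm0E subnn.
  by rewrite mpolyX0 scale1r.
by rewrite scale0r.
Qed.
Lemma mevX (i j : 'I_9) (v : coords) : (('X_i : {mpoly C[9]})^`M(j)).@[v] = (i == j)%:R.
Proof. by rewrite mderivXU mevalC. Qed.

Section S.
Variables a b : C.

Lemma F0E v : (F a b K0).@[v] = v iu1 * v ix - v iv1 * v iy.
Proof. by rewrite /F EK0 /= mevalB !mevalM !mevalXU. Qed.
Lemma F1E v : (F a b K1).@[v] = v iu2 * v iz - v iv2 * v it.
Proof. by rewrite /F EK0 EK1 /= mevalB !mevalM !mevalXU. Qed.
Lemma F2E v : (F a b K2).@[v] = v iw ^+ 2 + v ix * v iy + v iz * v it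
  - a * (v ix * v it + v iy * v iz) - b * (v ix * v iz + v iy * v it).
Proof. by rewrite /F EK0 EK1 /= !(mevalB, mevalD, mevalM, mevalXU, mevalC, rmorphXn). Qed.

End S.

Lemma evdB (v : coords) i (p q : {mpoly C[9]}) : ((p - q)^`M(i)).@[v] = (p^`M(i)).@[v] - (q^`M(i)).@[v].
Proof. by rewrite mderivB mevalB. Qed.
Lemma evdD (v : coords) i (p q : {mpoly C[9]}) : ((p + q)^`M(i)).@[v] = (p^`M(i)).@[v] + (q^`M(i)).@[v].
Proof. by rewrite mderivD mevalD. Qed.
Lemma evdM (v : coords) i (p q : {mpoly C[9]}) : ((p * q)^`M(i)).@[v] = (p^`M(i)).@[v] * q.@[v] + p.@[v] * (q^`M(i)).@[v].
Proof. by rewrite mderivM mevalD !mevalM. Qed.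
Lemma evdC (v : coords) i c (p : {mpoly C[9]}) : ((c%:MP * p)^`M(i)).@[v] = c * (p^`M(i)).@[v].
Proof. by rewrite mderiv_mulC mevalM mevalC. Qed.
Section S.
Variables a b : C.
Definition dd (j i : 'I_9) : C := (j == i)%:R.
Definition J0 (v : coords) i := dd iu1 i * v ix + v iu1 * dd ix i - (dd iv1 i * v iy + v iv1 * dd iy i).
Definition J1 (v : coords) i := dd iu2 i * v iz + v iu2 * dd iz i - (dd iv2 i * v it + v iv2 * dd it i).
Definition J2 (v : coords) i := dd iw i * v iw + v iw * dd iw i
  + (dd ix i * v iy + v ix * dd iy i) + (dd iz i * v it + v iz * dd it i)
  - a * ((dd ix i * v it + v ix * dd it i) + (dd iy i * v iz + v iy * dd iz i))
  - b * ((dd ix i * v iz + v ix * dd iz i) + (dd iy i * v it + v iy * dd it i)).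
End S.
Section G.
Variables (R : comNzRingType) (n : nat) (v : 'I_n -> R) (i : 'I_n).
Lemma gen0 (P1 P2 P3 P4 : {mpoly R[n]}) p1 p2 p3 p4 d1 d2 d3 d4 :
  P1.@[v] = p1 -> (P1^`M(i)).@[v] = d1 -> P2.@[v] = p2 -> (P2^`M(i)).@[v] = d2 ->
  P3.@[v] = p3 -> (P3^`M(i)).@[v] = d3 -> P4.@[v] = p4 -> (P4^`M(i)).@[v] = d4 ->
  ((P1 * P2 - P3 * P4)^`M(i)).@[v] = d1 * p2 + p1 * d2 - (d3 * p4 + p3 * d4).
Proof. move=> <- <- <- <- <- <- <- <-.
by rewrite mderivB !mderivM mevalB !mevalD !mevalM. Qed.
Lemma gen2 (a b : R) (Pw Px Py Pz Pt : {mpoly R[n]}) w x y z t dw dx dy dz dt :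
  Pw.@[v] = w -> (Pw^`M(i)).@[v] = dw -> Px.@[v] = x -> (Px^`M(i)).@[v] = dx ->
  Py.@[v] = y -> (Py^`M(i)).@[v] = dy -> Pz.@[v] = z -> (Pz^`M(i)).@[v] = dz ->
  Pt.@[v] = t -> (Pt^`M(i)).@[v] = dt ->
  ((Pw ^+ 2 + Px * Py + Pz * Pt - a%:MP * (Px * Pt + Py * Pz) - b%:MP * (Px * Pz + Py * Pt))^`M(i)).@[v]
  = dw * w + w * dw + (dx * y + x * dy) + (dz * t + z * dt)
    - a * ((dx * t + x * dt) + (dy * z + y * dz)) - b * ((dx * z + x * dz) + (dy * t + y * dt)).
Proof.
move=> <- <- <- <- <- <- <- <- <- <-.
by rewrite expr2 !mderivB !mderivD !mderiv_mulC !mderivD !mderivM !mevalB !mevalD !mevalM !mevalC !mevalD !mevalM.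
Qed.
End G.
Section S2.
Variables a b : C.
Ltac xx := first [exact: mevalXU | exact: mevX].
Lemma jac0 v i : jac a b v K0 i = J0 v i.
Proof. (rewrite mxE /F EK0 /=; apply: gen0; xx). Qed.
Lemma jac1 v i : jac a b v K1 i = J1 v i.
Proof. rewrite mxE /F EK0 EK1 /=; apply: gen0; xx. Qed.
Lemma jac2 v i : jac a b v K2 i = J2 a b v i.
Proof. (rewrite mxE /F EK0 EK1 /=; apply: gen2; xx). Qed.
End S2.

Lemma tau1_u1 (v : coords) : tau1 v iu1 = v iv1. Proof. by rewrite /tau1; idx. Qed.
Lemma tau1_v1 (v : coords) : tau1 v iv1 = v iu1. Proof. by rewrite /tau1; idx. Qed.
Lemma tau1_u2 (v : coords) : tau1 v iu2 = v iv2. Proof. by rewrite /tau1; idx. Qed.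
Lemma tau1_v2 (v : coords) : tau1 v iv2 = v iu2. Proof. by rewrite /tau1; idx. Qed.
Lemma tau1_x (v : coords) : tau1 v ix = v iy. Proof. by rewrite /tau1; idx. Qed.
Lemma tau1_y (v : coords) : tau1 v iy = v ix. Proof. by rewrite /tau1; idx. Qed.
Lemma tau1_z (v : coords) : tau1 v iz = v it. Proof. by rewrite /tau1; idx. Qed.
Lemma tau1_t (v : coords) : tau1 v it = v iz. Proof. by rewrite /tau1; idx. Qed.
Lemma tau1_w (v : coords) : tau1 v iw = v iw. Proof. by rewrite /tau1; idx. Qed.
Lemma tau2_u1 (v : coords) : tau2 v iu1 = v iu2. Proof. by rewrite /tau2; idx. Qed.
Lemma tau2_v1 (v : coords) : tau2 v iv1 = v iv2. Proof. by rewrite /tau2; idx. Qed.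
Lemma tau2_u2 (v : coords) : tau2 v iu2 = v iu1. Proof. by rewrite /tau2; idx. Qed.
Lemma tau2_v2 (v : coords) : tau2 v iv2 = v iv1. Proof. by rewrite /tau2; idx. Qed.
Lemma tau2_x (v : coords) : tau2 v ix = v iz. Proof. by rewrite /tau2; idx. Qed.
Lemma tau2_y (v : coords) : tau2 v iy = v it. Proof. by rewrite /tau2; idx. Qed.
Lemma tau2_z (v : coords) : tau2 v iz = v ix. Proof. by rewrite /tau2; idx. Qed.
Lemma tau2_t (v : coords) : tau2 v it = v iy. Proof. by rewrite /tau2; idx. Qed.
Lemma tau2_w (v : coords) : tau2 v iw = v iw. Proof. by rewrite /tau2; idx. Qed.
Lemma tau3_u1 (v : coords) : tau3 v iu1 = v iu1. Proof. by rewrite /tau3; idx. Qed.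
Lemma tau3_v1 (v : coords) : tau3 v iv1 = v iv1. Proof. by rewrite /tau3; idx. Qed.
Lemma tau3_u2 (v : coords) : tau3 v iu2 = v iu2. Proof. by rewrite /tau3; idx. Qed.
Lemma tau3_v2 (v : coords) : tau3 v iv2 = v iv2. Proof. by rewrite /tau3; idx. Qed.
Lemma tau3_x (v : coords) : tau3 v ix = v ix. Proof. by rewrite /tau3; idx. Qed.
Lemma tau3_y (v : coords) : tau3 v iy = v iy. Proof. by rewrite /tau3; idx. Qed.
Lemma tau3_z (v : coords) : tau3 v iz = v iz. Proof. by rewrite /tau3; idx. Qed.
Lemma tau3_t (v : coords) : tau3 v it = v it. Proof. by rewrite /tau3; idx. Qed.
Lemma tau3_w (v : coords) : tau3 v iw = - v iw. Proof. by rewrite /tau3 eqxx. Qed.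
Ltac tau1E := rewrite ?tau1_u1 ?tau1_v1 ?tau1_u2 ?tau1_v2 ?tau1_x ?tau1_y ?tau1_z ?tau1_t ?tau1_w.
Ltac tau2E := rewrite ?tau2_u1 ?tau2_v1 ?tau2_u2 ?tau2_v2 ?tau2_x ?tau2_y ?tau2_z ?tau2_t ?tau2_w.
Ltac tau3E := rewrite ?tau3_u1 ?tau3_v1 ?tau3_u2 ?tau3_v2 ?tau3_x ?tau3_y ?tau3_z ?tau3_t ?tau3_w.

Lemma mulrow3 (F : fieldType) n (c : 'rV[F]_3) (A : 'M[F]_(3, n)) i :
  (c *m A) 0 i = c 0 K0 * A K0 i + c 0 K1 * A K1 i + c 0 K2 * A K2 i.
Proof.
rewrite mxE !big_ord_recr big_ord0 /= add0r.
have -> : (widen_ord (leqnSn 2) (widen_ord (leqnSn 1) ord_max)) = K0 by apply: val_inj.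
have -> : (widen_ord (leqnSn 2) ord_max) = K1 by apply: val_inj.
have -> : (@ord_max 2) = K2 by apply: val_inj.
by [].
Qed.

Lemma rank3P (F : fieldType) n (A : 'M[F]_(3, n)) :
  (\rank A < 3)%N <-> exists c : 'rV_3, c != 0 /\ c *m A = 0.
Proof.
split.
  move=> lt3.
  have : kermx A != 0.
    by rewrite kermx_eq0 /row_free; apply/negP => /eqP E; rewrite E ltnn in lt3.
  case/rowV0Pn => c /sub_kermxP cA cnz.
  by exists c.
move=> [c [cnz cA]].
rewrite ltn_neqAle rank_leq_row andbT.
apply/negP => /eqP E.
have rf : row_free A by rewrite /row_free E.
by move: cnz; rewrite -(mulmx_free_eq0 _ rf) cA eqxx.
Qed.


Ltac lin e := first [ (rewrite -e; ring) | (apply/eqP; rewrite -oppr_eq0; apply/eqP; rewrite -e; ring) ].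
Ltac slin := match goal with e : _ = 0 |- _ => lin e end.

Definition SE (a b : C) (v : coords) (c0 c1 c2 : C) : Prop :=
  c0 * v ix = 0 /\ c0 * v iy = 0 /\ c1 * v iz = 0 /\ c1 * v it = 0 /\ c2 * (v iw + v iw) = 0 /\
  c0 * v iu1 + c2 * (v iy - a * v it - b * v iz) = 0 /\
  - (c0 * v iv1) + c2 * (v ix - a * v iz - b * v it) = 0 /\
  c1 * v iu2 + c2 * (v it - a * v iy - b * v ix) = 0 /\
  - (c1 * v iv2) + c2 * (v iz - a * v ix - b * v iy) = 0.

Lemma SE_iff a b v c0 c1 c2 :
  (forall i, c0 * J0 v i + c1 * J1 v i + c2 * J2 a b v i = 0) <-> SE a b v c0 c1 c2.
Proof.
split.
  move=> H.
  move: (H iu1) (H iv1) (H iu2) (H iv2) (H ix) (H iy) (H iz) (H it) (H iw).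
  rewrite /SE /J0 /J1 /J2 /dd; idx.
  move=> e1 e2 e3 e4 e5 e6 e7 e8 e9.
  by do !split; slin.
rewrite /SE => E i; move: i E; apply: I9P;
  rewrite /J0 /J1 /J2 /dd; idx;
  move=> [e1 [e2 [e3 [e4 [e5 [e6 [e7 [e8 e9]]]]]]]]; slin.
Qed.

Lemma sing_iff a b v : singular a b v <->
  onX a b v /\ exists c0 c1 c2 : C, (c0 != 0 \/ c1 != 0 \/ c2 != 0) /\ SE a b v c0 c1 c2.
Proof.
rewrite /singular rank3P; split.
  move=> [O [c [cnz cA]]]; split => //.
  exists (c 0 K0), (c 0 K1), (c 0 K2); split.
    case/rV0Pn: cnz => k; move: k; apply: I3P => ck; auto.
  apply/SE_iff => i.
  by rewrite -(jac0 a b) -(jac1 a b) -jac2 -mulrow3 cA mxE.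
move=> [O [c0 [c1 [c2 [nz E]]]]]; split => //.
exists (\row_(k < 3) (if k == K0 then c0 else if k == K1 then c1 else c2)); split.
  apply/rV0Pn.
  case: nz => [h|[h|h]]; [exists K0 | exists K1 | exists K2]; by rewrite mxE.
apply/matrixP => p i; rewrite (ord1 p) mulrow3 (jac0 a b) (jac1 a b) jac2 !mxE /=.
by move/SE_iff: E => ->.
Qed.


Definition VV (v : coords) : Prop :=
  (v iu1 != 0 \/ v iv1 != 0) /\ (v iu2 != 0 \/ v iv2 != 0) /\
  (v ix != 0 \/ v iy != 0 \/ v iz != 0 \/ v it != 0 \/ v iw != 0).

Lemma valid_iff v : valid v <-> VV v.
Proof.
split.
  move=> H; split; [|split].
  - have [i [fi vi]] := H K0; move: i fi vi; apply: I9P; fac => // _ h; auto.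
  - have [i [fi vi]] := H K1; move: i fi vi; apply: I9P; fac => // _ h; auto.
  - have [i [fi vi]] := H K2; move: i fi vi; apply: I9P; fac => // _ h; auto 6.
move=> [[h|h] [[h'|h'] h'']]; apply: I3P;
  try by [exists iu1; fac | exists iv1; fac | exists iu2; fac | exists iv2; fac].
all: case: h'' => [h2|[h2|[h2|[h2|h2]]]];
  by [exists ix; fac | exists iy; fac | exists iz; fac | exists it; fac | exists iw; fac].
Qed.

Definition EQ (a b : C) (v : coords) : Prop :=
  v iu1 * v ix - v iv1 * v iy = 0 /\ v iu2 * v iz - v iv2 * v it = 0 /\
  v iw ^+ 2 + v ix * v iy + v iz * v it
  - a * (v ix * v it + v iy * v iz) - b * (v ix * v iz + v iy * v it) = 0.

Lemma onX_iff a b v : onX a b v <-> VV v /\ EQ a b v.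
Proof.
rewrite /onX valid_iff /EQ; split.
  by move=> [Vv H]; split => //; rewrite -(F0E a b) -(F1E a b) -(F2E a b) !H.
move=> [Vv [e0 [e1 e2]]]; split => //; apply: I3P;
  by rewrite ?F0E ?F1E ?F2E.
Qed.

Lemma onX_tau1 a b v : onX a b v -> onX a b (tau1 v).
Proof.
rewrite !onX_iff /VV /EQ; tau1E.
move=> [[h1 [h2 h3]] [e1 [e2 e3]]].
split; first by split; [tauto | split; tauto].
by split; [|split]; slin.
Qed.
Lemma onX_tau2 a b v : onX a b v -> onX a b (tau2 v).
Proof.
rewrite !onX_iff /VV /EQ; tau2E.
move=> [[h1 [h2 h3]] [e1 [e2 e3]]].
split; first by split; [tauto | split; tauto].
by split; [|split]; slin.
Qed.
Lemma onX_tau3 a b v : onX a b v -> onX a b (tau3 v).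
Proof.
rewrite !onX_iff /VV /EQ; tau3E.
move=> [[h1 [h2 h3]] [e1 [e2 e3]]].
split; first by split; [tauto | split; [tauto|rewrite oppr_eq0; tauto]].
by split; [|split]; slin.
Qed.

Lemma sing_tau1 a b v : singular a b v -> singular a b (tau1 v).
Proof.
rewrite !sing_iff => -[O [c0 [c1 [c2 [nz E]]]]]; split; first exact: onX_tau1.
exists (- c0), (- c1), c2; split; first by rewrite !oppr_eq0.
move: E; rewrite /SE; tau1E.
move=> [e1 [e2 [e3 [e4 [e5 [e6 [e7 [e8 e9]]]]]]]].
by do !split; slin.
Qed.
Lemma sing_tau2 a b v : singular a b v -> singular a b (tau2 v).
Proof.
rewrite !sing_iff => -[O [c0 [c1 [c2 [nz E]]]]]; split; first exact: onX_tau2.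
exists c1, c0, c2; split; first by tauto.
move: E; rewrite /SE; tau2E.
move=> [e1 [e2 [e3 [e4 [e5 [e6 [e7 [e8 e9]]]]]]]].
by do !split; slin.
Qed.
Lemma sing_tau3 a b v : singular a b v -> singular a b (tau3 v).
Proof.
rewrite !sing_iff => -[O [c0 [c1 [c2 [nz E]]]]]; split; first exact: onX_tau3.
exists c0, c1, c2; split; first by tauto.
move: E; rewrite /SE; tau3E.
move=> [e1 [e2 [e3 [e4 [e5 [e6 [e7 [e8 e9]]]]]]]].
by do !split; slin.
Qed.

Import Num.Theory.

Lemma proj_sym v v' : proj_eq v v' -> proj_eq v' v.
Proof.
move=> [lam [nz H]]; exists (fun k => (lam k)^-1); split.
  by move=> k; rewrite invr_eq0.
by move=> i; rewrite H mulrA mulVf ?mul1r.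
Qed.

Lemma proj_trans v1 v2 v3 : proj_eq v1 v2 -> proj_eq v2 v3 -> proj_eq v1 v3.
Proof.
move=> [l [nz H]] [l' [nz' H']]; exists (fun k => l' k * l k); split.
  by move=> k; rewrite mulf_neq0.
by move=> i; rewrite H' H mulrA.
Qed.

Lemma proj_tau1 v v' : proj_eq v v' -> proj_eq (tau1 v) (tau1 v').
Proof.
move=> [l [nz H]]; exists l; split => //.
apply: I9P; tau1E; rewrite H; fac => //.
Qed.
Lemma proj_tau3 v v' : proj_eq v v' -> proj_eq (tau3 v) (tau3 v').
Proof.
move=> [l [nz H]]; exists l; split => //.
apply: I9P; tau3E; rewrite ?H; fac => //.
by rewrite mulrN.
Qed.
Lemma proj_tau2 v v' : proj_eq v v' -> proj_eq (tau2 v) (tau2 v').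
Proof.
move=> [l [nz H]].
exists (fun k => if k == K0 then l K1 else if k == K1 then l K0 else l K2); split.
  by move=> k; case: ifP => _; [|case: ifP => _].
apply: I9P; tau2E; rewrite H; fac => //.
Qed.

Lemma sq1 (m : C) : m * m = 1 -> m = 1 \/ m = -1.
Proof.
move=> mm.
have : (m - 1) * (m + 1) = 0.
  have -> : (m - 1) * (m + 1) = m * m - 1 by ring.
  by rewrite mm subrr.
move/eqP; rewrite mulf_eq0 subr_eq0 addr_eq0 => /orP[/eqP|/eqP]; auto.
Qed.

Lemma two0 (x : C) : x = - x -> x = 0.
Proof.
move=> e; have : x *+ 2 = 0 by rewrite mulr2n {1}e addNr.
by move/eqP; rewrite mulrn_eq0 /= => /eqP.
Qed.

Lemma core (a b x y z t m n : C) : x != 0 -> y = m * x -> z = n * x -> t = n * y ->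
  m * m = 1 -> n * n = 1 ->
  x * y + z * t - a * (x * t + y * z) - b * (x * z + y * t) = 0 ->
  [/\ y - a * t - b * z = 0, x - a * z - b * t = 0, t - a * y - b * x = 0
    & z - a * x - b * y = 0].
Proof.
move=> xnz -> -> -> mm nn e.
set K := m - a * m * n - b * n.
have HK : K = 0.
  have h : x * x * (K * 2) = 0.
    rewrite -e /K; case: (sq1 mm) => ->; case: (sq1 nn) => ->; ring.
  move/eqP: h; rewrite !mulf_eq0 (negbTE xnz) /= pnatr_eq0 orbF => /eqP //.
split.
- transitivity (x * K); last by rewrite HK mulr0.
  by rewrite /K; ring.
- transitivity (x * m * K); last by rewrite HK mulr0.
  by rewrite /K; case: (sq1 mm) => ->; case: (sq1 nn) => ->; ring.
- transitivity (x * n * K); last by rewrite HK mulr0.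
  by rewrite /K; case: (sq1 mm) => ->; case: (sq1 nn) => ->; ring.
- transitivity (x * m * n * K); last by rewrite HK mulr0.
  by rewrite /K; case: (sq1 mm) => ->; case: (sq1 nn) => ->; ring.
Qed.


Lemma fixed_sing a b v : onX a b v -> Gfixed v -> singular a b v.
Proof.
move=> O [[l [lnz H1]] [[m [mnz H2]] [n [nnz H3]]]].
have O' := O; move/onX_iff: O => [[_ [_ Vp]] [_ [_ e]]].
move: (H1 ix) (H1 iy) (H2 ix) (H2 iy) (H2 iz) (H3 iw) (H3 ix) (H3 iy) (H3 iz) (H3 it).
tau1E; tau2E; tau3E; fac.
move: (l K2) (m K2) (n K2) => L M N hy hx hz ht hx2 hw h3x h3y h3z h3t.
have w0 : v iw = 0.
  case: (eqVneq (v iw) 0) => // wnz; exfalso.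
  have N1 : N = -1.
    have : (N + 1) * v iw = 0 by rewrite mulrDl mul1r -hw addNr.
    move/eqP; rewrite mulf_eq0 (negbTE wnz) orbF addr_eq0 => /eqP //.
  rewrite N1 !mulN1r in h3x h3y h3z h3t.
  move: e; rewrite (two0 h3x) (two0 h3y) (two0 h3z) (two0 h3t).
  rewrite !(mul0r, mulr0, addr0, subr0) => /eqP; rewrite expf_eq0 /=.
  by rewrite (negbTE wnz).
have xnz : v ix != 0.
  apply/negP => /eqP x0.
  move: Vp; rewrite w0 hz ht hy x0 !mulr0 eqxx.
  by case=> [|[|[|[|]]]] /negP.
have LL : L * L = 1.
  apply: (mulIf xnz); by rewrite -mulrA -hy -hx mul1r.
have MM : M * M = 1.
  apply: (mulIf xnz); by rewrite -mulrA -hz -hx2 mul1r.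
rewrite w0 expr2 mul0r add0r in e.
have [c1 c2 c3 c4] := core xnz hy hz ht LL MM e.
apply/sing_iff; split => //; exists 0, 0, 1; split; first by right; right; exact: oner_neq0.
rewrite /SE w0 !mul0r !mul1r !oppr0 !add0r.
by do !split.
Qed.

Theorem lemma4p1 (a b : C) :
  (smoothX a b -> forall v, onX a b v -> ~ Gfixed v) /\
  (forall s, singular a b s -> (forall v, singular a b v -> proj_eq s v) ->
     forall v, onX a b v -> (Gfixed v <-> proj_eq s v)).
Proof.
split.
  by move=> sm v O G; exact: (sm v O (fixed_sing O G)).
move=> s Ss U v O; split.
  by move=> G; exact: U _ (fixed_sing O G).
move=> Psv; split; [|split].
- apply: proj_trans (proj_sym Psv) _.
  exact: proj_trans (U _ (sing_tau1 Ss)) (proj_tau1 Psv).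
- apply: proj_trans (proj_sym Psv) _.
  exact: proj_trans (U _ (sing_tau2 Ss)) (proj_tau2 Psv).
- apply: proj_trans (proj_sym Psv) _.
  exact: proj_trans (U _ (sing_tau3 Ss)) (proj_tau3 Psv).
Qed.
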